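(* Let $n\ge 2$ and $\alpha\in(0,2]$. Define the $n$-qubit observables $\mathcal{M}_Z=(|0\rangle\langle 0|)^{\otimes n}+(|1\rangle\langle 1|)^{\otimes n}$ and $\mathcal{M}_X=\sigma_x^{\otimes n}$, where $\sigma_x=|0\rangle\langle 1|+|1\rangle\langle 0|$. Then for every biseparable $n$-qubit state $\rho$, $$\alpha\operatorname{Tr}[\rho\,\mathcal{M}_Z]\pm\operatorname{Tr}[\rho\,\mathcal{M}_X]\le \frac{\alpha}{2}+1$$ for both choices of sign.
   Context: $\{|0\rangle,|1\rangle\}$ is the computational basis of $\mathbb{C}^2$. An $n$-qubit pure state is biseparable if the $n$ qubits can be split into two nonempty disjoint subsets such that the state is a tensor product of a pure state on the first subset and a pure state on the second. A mixed $n$-qubit state is biseparable if it is a convex combination of projectors onto biseparable pure states (the bipartitions may differ between terms). *)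

(* Defs.v *)
(* Complex scalars: an arbitrary numClosedFieldType C
   (e.g. algC, or complex R for a real closed field R). *)
From HB Require Import structures.
From mathcomp Require Import all_boot all_order all_algebra.
Set Implicit Arguments. Unset Strict Implicit. Unset Printing Implicit Defensive.
Import Order.TTheory GRing.Theory Num.Theory.
Local Open Scope ring_scope.

(* Computational basis of (C^2)^{\otimes n}: bit strings x : 'I_n -> bool,
   bit false = |0>, bit true = |1>. *)
Definition bits (n : nat) := {ffun 'I_n -> bool}.

Section QubitDefs.
Variable C : numClosedFieldType.
Variable n : nat.

Definition qvec := bits n -> C.
Definition qop := bits n -> bits n -> C.

Definition proj0 : bool -> bool -> C := fun b c => ((~~ b) && (~~ c))%:R.
Definition proj1 : bool -> bool -> C := fun b c => (b && c)%:R.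
Definition sigma_x : bool -> bool -> C := fun b c => (b != c)%:R.

Definition tens_pow (A : bool -> bool -> C) : qop :=
  fun x y => \prod_(i < n) A (x i) (y i).

Definition MZ : qop := fun x y => tens_pow proj0 x y + tens_pow proj1 x y.
Definition MX : qop := tens_pow sigma_x.

Definition trace_prod (rho M : qop) : C :=
  \sum_(x : bits n) \sum_(y : bits n) rho x y * M y x.

Definition normalized (psi : qvec) : Prop :=
  \sum_(x : bits n) psi x * (psi x)^* = 1.

(* f depends only on the qubits in S, i.e. f is a vector on the subsystem S
   (written as a function of the full bit string). *)
Definition depends_only_on (S : {set 'I_n}) (f : qvec) : Prop :=
  forall x y : bits n, (forall i, i \in S -> x i = y i) -> f x = f y.

(* psi = phi_S \otimes chi_{S^c} for a nontrivial bipartition (S, S^c) *)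
Definition biseparable_pure (psi : qvec) : Prop :=
  normalized psi /\
  exists S : {set 'I_n}, [/\ S != set0, S != setT &
    exists phi chi : qvec, [/\ depends_only_on S phi,
      depends_only_on (~: S) chi & forall x, psi x = phi x * chi x]].

Definition proj_op (psi : qvec) : qop := fun x y => psi x * (psi y)^*.

Definition biseparable (rho : qop) : Prop :=
  exists (m : nat) (p : 'I_m -> C) (psi : 'I_m -> qvec),
    [/\ forall k, 0 <= p k,
        \sum_(k < m) p k = 1,
        forall k, biseparable_pure (psi k) &
        forall x y, rho x y = \sum_(k < m) p k * proj_op (psi k) x y].

End QubitDefs.

(* Main.v *)
Require Import Defs.
From HB Require Import structures.
From mathcomp Require Import all_boot all_order all_algebra.
From mathcomp Require Import ring.
Set Implicit Arguments. Unset Strict Implicit. Unset Printing Implicit Defensive.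
Import Order.TTheory GRing.Theory Num.Theory.
Local Open Scope ring_scope.

Section Helpers.
Variable C : numClosedFieldType.

Lemma prod_bool n (b : 'I_n -> bool) :
  \prod_(i < n) ((b i)%:R : C) = ([forall i, b i])%:R.
Proof.
case: (boolP [forall i, b i]) => [/forallP H|/forallPn [i Hi]].
  by rewrite big1 // => i _; rewrite H.
by rewrite (bigD1 i) //= (negbTE Hi) mul0r.
Qed.

Lemma sum_pred1 (T : finType) (G : T -> C) c :
  \sum_(y : T) G y * (y == c)%:R = G c.
Proof.
rewrite (bigD1 c) //= eqxx mulr1 big1 ?addr0 // => y /negbTE ->.
by rewrite mulr0.
Qed.

Lemma sum2_pred1 (T : finType) (F : T -> T -> C) c :
  \sum_(x : T) \sum_(y : T) F x y * ((x == c)%:R * (y == c)%:R) = F c c.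
Proof.
under eq_bigr => x _ do under eq_bigr => y _ do rewrite mulrA.
under eq_bigr => x _ do rewrite sum_pred1.
by rewrite sum_pred1.
Qed.

Lemma amgm (u v : C) : u \is Num.real -> v \is Num.real ->
  2 * u * v <= u ^+ 2 + v ^+ 2.
Proof.
move=> ur vr; rewrite -subr_ge0.
have -> : u ^+ 2 + v ^+ 2 - 2 * u * v = (u - v) ^+ 2 by ring.
by rewrite -real_normK ?rpredB // exprn_ge0.
Qed.

Lemma sub_sum_le (T : finType) (F : T -> C) (s : seq T) :
  uniq s -> (forall x, 0 <= F x) -> \sum_(x <- s) F x <= \sum_x F x.
Proof.
move=> us F0; rewrite big_uniq // [X in _ <= X](bigID (fun x => x \in s)) /= lerDl.
by apply: sumr_ge0.
Qed.

Lemma arith (alpha P m X : C) : 0 < alpha -> alpha <= 2 ->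
  P \is Num.real -> X <= 1 - P + m -> m <= P -> m <= 1 - P ->
  alpha * P + X <= alpha / 2 + 1.
Proof.
move=> a0 a2 Pr HX HmP Hm1.
have half_r : (2^-1 : C) \is Num.real by rewrite rpredV rpred_nat.
case/orP: (real_leVge Pr half_r) => HP.
- apply: (le_trans (lerD (lexx _) HX)).
  have H1 : alpha * P <= alpha / 2 by rewrite ler_wpM2l // ltW.
  rewrite -subr_ge0.
  have -> : alpha / 2 + 1 - (alpha * P + (1 - P + m)) =
     (alpha / 2 - alpha * P) + (P - m) by ring.
  by rewrite addr_ge0 // subr_ge0.
- apply: (le_trans (lerD (lexx _) HX)).
  rewrite -subr_ge0.
  have -> : alpha / 2 + 1 - (alpha * P + (1 - P + m)) =
     (2 - alpha) * (P - 2^-1) + (1 - P - m).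
    have h2 : (2 : C) != 0 by rewrite pnatr_eq0.
    by field.
  by rewrite addr_ge0 ?mulr_ge0 // subr_ge0.
Qed.

Variable n : nat.
Implicit Types (x y : bits n) (psi : qvec C n).

Definition z0 : bits n := [ffun _ => false].
Definition z1 : bits n := [ffun _ => true].
Definition comp x : bits n := [ffun i => ~~ x i].

Lemma compK : involutive comp.
Proof. by move=> x; apply/ffunP => i; rewrite !ffunE negbK. Qed.

Lemma MZ_eq x y : @MZ C n y x =
  (x == z0)%:R * (y == z0)%:R + (x == z1)%:R * (y == z1)%:R.
Proof.
rewrite /MZ /tens_pow /proj0 /proj1 !prod_bool -!natrM !mulnb.
congr (_%:R + _%:R); congr (nat_of_bool _).
  apply/forallP/andP.
    move=> H; split; apply/eqP/ffunP => i; rewrite ffunE;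
      by case/andP: (H i) => /negbTE ? /negbTE ?.
  by case=> /eqP -> /eqP -> i; rewrite !ffunE.
apply/forallP/andP.
  move=> H; split; apply/eqP/ffunP => i; rewrite ffunE;
    by case/andP: (H i).
by case=> /eqP -> /eqP -> i; rewrite !ffunE.
Qed.

Lemma MX_eq x y : @MX C n y x = (y == comp x)%:R.
Proof.
rewrite /MX /tens_pow /sigma_x prod_bool; congr (_%:R); congr (nat_of_bool _).
apply/forallP/eqP.
  by move=> H; apply/ffunP => i; rewrite ffunE; move: (H i); case: (y i); case: (x i).
by move=> -> i; rewrite ffunE; case: (x i).
Qed.

Lemma Z_eq psi : trace_prod (proj_op psi) (@MZ C n) = `|psi z0| ^+ 2 + `|psi z1| ^+ 2.
Proof.
rewrite /trace_prod /proj_op.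
under eq_bigr => x _ do under eq_bigr => y _ do rewrite MZ_eq mulrDr.
under eq_bigr => x _ do rewrite big_split.
rewrite big_split /=.
by rewrite (sum2_pred1 (fun x y => psi x * (psi y)^*)) (sum2_pred1 (fun x y => psi x * (psi y)^*)) -!normCK.
Qed.

Lemma X_eq psi : trace_prod (proj_op psi) (@MX C n) = \sum_x psi x * (psi (comp x))^*.
Proof.
rewrite /trace_prod /proj_op.
apply: eq_bigr => x _.
under eq_bigr => y _ do rewrite MX_eq.
by rewrite (sum_pred1 (fun y => psi x * (psi y)^*)).
Qed.

Lemma X_real psi : (\sum_x psi x * (psi (comp x))^*) \is Num.real.
Proof.
rewrite CrealE rmorph_sum /=; apply/eqP.
under eq_bigr => x _ do rewrite rmorphM /= conjCK.
rewrite (reindex_inj (inv_inj compK)) /=.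
by apply: eq_bigr => x _; rewrite compK mulrC.
Qed.

Lemma neq_at x y k : x k != y k -> x != y.
Proof. by apply: contraNneq => ->. Qed.

Lemma pure_bound psi (alpha : C) : 0 < alpha -> alpha <= 2 ->
  biseparable_pure psi ->
  alpha * trace_prod (proj_op psi) (@MZ C n) + trace_prod (proj_op psi) (@MX C n) <= alpha / 2 + 1 /\
  alpha * trace_prod (proj_op psi) (@MZ C n) - trace_prod (proj_op psi) (@MX C n) <= alpha / 2 + 1.
Proof.
move=> a0 a2 [Hn [S [S0 ST [phi [chi [dphi dchi Hpsi]]]]]].
have [i Hi] : exists i, i \in S by apply/set0Pn.
have [j Hj] : exists j, j \notin S.
  case: (pickP (fun j => j \notin S)) => [j Hj | H]; first by exists j.
  by case/eqP: ST; apply/setP => k; rewrite inE; apply/negbFE/H.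
set u : bits n := [ffun k => k \notin S].
set v : bits n := [ffun k => k \in S].
pose g x := `|psi x|.
have gr x : g x \is Num.real by apply: normr_real.
have g0 x : 0 <= g x ^+ 2 by apply: exprn_ge0; apply: normr_ge0.
have norm1 : \sum_x g x ^+ 2 = 1.
  by rewrite -Hn; apply: eq_bigr => x _; rewrite /g normCK.
have e01 : (z0 == z1) = false by apply/negbTE/(neq_at (k := i)); rewrite !ffunE.
have e0u : (z0 == u) = false by apply/negbTE/(neq_at (k := j)); rewrite !ffunE Hj.
have e0v : (z0 == v) = false by apply/negbTE/(neq_at (k := i)); rewrite !ffunE Hi.
have e1u : (z1 == u) = false by apply/negbTE/(neq_at (k := i)); rewrite !ffunE Hi.
have e1v : (z1 == v) = false by apply/negbTE/(neq_at (k := j)); rewrite !ffunE (negbTE Hj).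
have euv : (u == v) = false by apply/negbTE/(neq_at (k := i)); rewrite !ffunE Hi.
have prodE : g z0 * g z1 = g u * g v.
  rewrite /g -!normrM !Hpsi.
  have -> : phi u = phi z0 by apply: dphi => k Hk; rewrite !ffunE Hk.
  have -> : phi v = phi z1 by apply: dphi => k Hk; rewrite !ffunE Hk.
  have -> : chi u = chi z1 by apply: dchi => k; rewrite in_setC => Hk; rewrite !ffunE Hk.
  have -> : chi v = chi z0 by apply: dchi => k; rewrite in_setC => Hk; rewrite !ffunE (negbTE Hk).
  by congr `|_|; ring.
set P := g z0 ^+ 2 + g z1 ^+ 2.
set m := 2 * g z0 * g z1.
have HmP : m <= P by apply: amgm.
have Hm1 : m <= 1 - P.
  have H4 : P + (g u ^+ 2 + g v ^+ 2) <= 1.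
    rewrite -norm1.
    have := @sub_sum_le _ (fun x => g x ^+ 2) [:: z0; z1; u; v].
    rewrite /= !inE e01 e0u e0v e1u e1v euv /= !big_cons big_nil => H.
    have := H isT g0. by rewrite /P !addrA addr0.
  rewrite /m -mulrA prodE mulrA.
  apply: (le_trans (amgm (gr u) (gr v))).
  by rewrite lerBrDl.
set X := \sum_x psi x * (psi (comp x))^*.
have HX : `|X| <= 1 - P + m.
  apply: (le_trans (ler_norm_sum _ _ _)).
  under eq_bigr => x _ do rewrite normrM norm_conjC.
  rewrite -/g.
  set S1 := \sum_x g x * g (comp x).
  pose h x := g x ^+ 2 + g (comp x) ^+ 2 - 2 * g x * g (comp x).
  have h0 x : 0 <= h x by rewrite /h subr_ge0 amgm.
  have hsum : \sum_x h x = 2 - 2 * S1.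
    rewrite /h sumrB big_split /= norm1.
    rewrite (reindex_inj (inv_inj compK)) /=.
    under [X in _ + X - _]eq_bigr => x _ do rewrite compK.
    rewrite norm1 /S1 mulr_sumr; congr (_ - _).
    by apply: eq_bigr => x _; rewrite mulrA.
  have := @sub_sum_le _ h [:: z0; z1].
  rewrite /= !inE e01 !big_cons big_nil addr0 hsum => /(_ isT h0).
  have c0 : comp z0 = z1 by apply/ffunP => k; rewrite !ffunE.
  have c1 : comp z1 = z0 by apply/ffunP => k; rewrite !ffunE.
  rewrite /h c0 c1 => H.
  have H2 : 2 * S1 <= 2 * (1 - P + m).
    rewrite -subr_ge0; move: H; rewrite -subr_ge0 /P /m.
    suff -> : 2 * (1 - (g z0 ^+ 2 + g z1 ^+ 2) + 2 * g z0 * g z1) - 2 * S1 =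
      2 - 2 * S1 - (g z0 ^+ 2 + g z1 ^+ 2 - 2 * g z0 * g z1 + (g z1 ^+ 2 + g z0 ^+ 2 - 2 * g z1 * g z0)) by [].
    by ring.
  by rewrite ler_pM2l ?ltr0n in H2.
have Xr : X \is Num.real by apply: X_real.
rewrite Z_eq X_eq -/X -/(g z0) -/(g z1) -/P.
have Pr : P \is Num.real by rewrite rpredD // rpredX.
split; apply: (@arith alpha P m) => //.
  exact: le_trans (real_ler_norm Xr) HX.
by rewrite -normrN in HX; apply: le_trans (real_ler_norm _) HX; rewrite rpredN.
Qed.

Lemma trace_lin m (p : 'I_m -> C) (psi : 'I_m -> qvec C n) (rho M : qop C n) :
  (forall x y, rho x y = \sum_(k < m) p k * proj_op (psi k) x y) ->
  trace_prod rho M = \sum_(k < m) p k * trace_prod (proj_op (psi k)) M.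
Proof.
move=> rhoE; rewrite /trace_prod.
under eq_bigr => x _ do under eq_bigr => y _ do rewrite rhoE mulr_suml.
under eq_bigr => x _ do rewrite exchange_big.
rewrite exchange_big; apply: eq_bigr => k _; rewrite mulr_sumr.
apply: eq_bigr => x _; rewrite mulr_sumr; apply: eq_bigr => y _.
by rewrite mulrA.
Qed.

End Helpers.

Theorem theorem1 (C : numClosedFieldType) (n : nat) (alpha : C)
  (rho : qop C n) :
  (2 <= n)%N -> 0 < alpha -> alpha <= 2 -> biseparable rho ->
  alpha * trace_prod rho (@MZ C n) + trace_prod rho (@MX C n) <= alpha / 2 + 1 /\
  alpha * trace_prod rho (@MZ C n) - trace_prod rho (@MX C n) <= alpha / 2 + 1.
Proof.
move=> _ a0 a2 [m [p [psi [p0 psum pure rhoE]]]].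
rewrite !(trace_lin _ rhoE).
have Hb k := pure_bound a0 a2 (pure k).
have -> : alpha / 2 + 1 = \sum_(k < m) p k * (alpha / 2 + 1).
  by rewrite -mulr_suml psum mul1r.
rewrite mulr_sumr -sumrB -big_split /=.
split; apply: ler_sum => k _.
  rewrite mulrCA -mulrDr; apply: ler_wpM2l => //; exact: (Hb k).1.
rewrite mulrCA -mulrBr; apply: ler_wpM2l => //; exact: (Hb k).2.
Qed.
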